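(* Let $\mathfrak N=\mathcal V\oplus\mathfrak Z$ be a two-step nilpotent Lie algebra of type $(p,q)$ with $[\mathfrak N,\mathfrak N]=\mathfrak Z$ equal to the center. Let $C=(C_1,\dots,C_p)\in\mathfrak{so}(q)^p$ be its structure matrices with respect to some adapted basis, viewed as linear maps $\mathbb R^q\to\mathbb R^q$. Then $\mathfrak N$ is a direct sum of two nonzero ideals if and only if there is a basis $\{A_1,\dots,A_l\}\cup\{B_1,\dots,B_k\}$ of $\mathrm{span}\{C_1,\dots,C_p\}\subset\mathfrak{so}(q)$ such that $\mathbb R^q=\mathcal V_1\oplus\mathcal V_2$, where $\mathcal V_2=\bigcap_{i=1}^l\ker A_i$ and $\mathcal V_1=\bigcap_{i=1}^k\ker B_i$.
   Context: A two-step nilpotent Lie algebra $\mathfrak N$ has type $(p,q)$ if $\dim[\mathfrak N,\mathfrak N]=p$ and the codimension is $q$. An adapted basis is a basis $\{v_1,\dots,v_q,Z_1,\dots,Z_p\}$ of $\mathfrak N$ where $\{Z_k\}$ is a basis of $[\mathfrak N,\mathfrak N]$. The structure matrices $C_k\in\mathfrak{so}(q)$ (real skew-symmetric $q\times q$ matrices) are defined by $[v_i,v_j]=\sum_k(C_k)_{ij}Z_k$. We identify $\mathcal V=\mathrm{span}\{v_i\}$ with $\mathbb R^q$. *)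

(* Defs.v *)
From HB Require Import structures.
From mathcomp Require Import all_boot all_order all_algebra.
Set Implicit Arguments. Unset Strict Implicit. Unset Printing Implicit Defensive.
Import Order.TTheory GRing.Theory Num.Theory.
Local Open Scope ring_scope.

(* The Lie algebra N = V (+) Z is modelled on row vectors 'rV_(q + p):
   the first q coordinates are the coordinates on the adapted basis v_1..v_q of V,
   the last p coordinates those on Z_1..Z_p.  Given the structure matrices
   C : 'I_p -> 'M_q, the bracket is
     [x, y] = sum_k (sum_{i,j} x_i (C_k)_{ij} y_j) Z_k,
   i.e. [v_i, v_j] = sum_k (C_k)_{ij} Z_k and Z is central. *)
Definition lie_bracket (R : fieldType) (p q : nat) (C : 'I_p -> 'M[R]_q)
  (x y : 'rV[R]_(q + p)) : 'rV[R]_(q + p) :=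
  row_mx 0 (\row_k (lsubmx x *m C k *m (lsubmx y)^T) 0 0).

Definition is_ideal (R : fieldType) (p q : nat) (C : 'I_p -> 'M[R]_q)
  (I : {vspace 'rV[R]_(q + p)}) : Prop :=
  forall x y : 'rV[R]_(q + p), y \in I -> lie_bracket C x y \in I.

Definition decomposable (R : fieldType) (p q : nat) (C : 'I_p -> 'M[R]_q) : Prop :=
  exists I J : {vspace 'rV[R]_(q + p)},
    [/\ is_ideal C I, is_ideal C J, I != 0%VS, J != 0%VS &
        ((I + J)%VS = fullv /\ (I :&: J)%VS = 0%VS)].

(* Kernel of a matrix A viewed as the linear map x |-> A x on R^q, represented
   by row vectors: the row space of kermx A^T is {x | A *m x^T = 0}. *)
Definition ker_map (R : fieldType) (q : nat) (A : 'M[R]_q) : 'M[R]_q :=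
  kermx A^T.

(* Main.v *)
Require Import Defs.
From HB Require Import structures.
From mathcomp Require Import all_boot all_order all_algebra.
Import Order.TTheory GRing.Theory Num.Theory.
Local Open Scope ring_scope.

Module Aux.
Set Implicit Arguments. Unset Strict Implicit. Unset Printing Implicit Defensive.

Lemma size_ftup (T : Type) n (f : 'I_n -> T) : size (map f (enum 'I_n)) == n.
Proof. by rewrite size_map size_enum_ord. Qed.
Definition ftup (T : Type) n (f : 'I_n -> T) : n.-tuple T := Tuple (size_ftup f).
Lemma ftup_nth (R : fieldType) (vT : vectType R) n (f : 'I_n -> vT) (i : 'I_n) :
  (ftup f)`_i = f i.
Proof. by rewrite /= (nth_map i) ?nth_ord_enum // size_enum_ord. Qed.

Definition brk (R : fieldType) p q (C : 'I_p -> 'M[R]_q) (u w : 'rV[R]_q) : 'rV[R]_p :=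
  \row_k (u *m C k *m w^T) 0 0.
Definition Phi (R : fieldType) p q (C : 'I_p -> 'M[R]_q) (om : 'rV[R]_p) : 'M[R]_q :=
  \sum_k om 0 k *: C k.

Lemma brk_Phi (R : fieldType) p q (C : 'I_p -> 'M[R]_q) u w om :
  (brk C u w *m om^T) 0 0 = (u *m Phi C om *m w^T) 0 0.
Proof.
rewrite /Phi mulmx_sumr mulmx_suml summxE [LHS]mxE; apply: eq_bigr => k _.
rewrite -scalemxAr -scalemxAl [RHS]mxE mulrC; congr (_ * _); rewrite !mxE //.
Qed.

Lemma brkD (R : fieldType) p q (C : 'I_p -> 'M[R]_q) u w1 w2 :
  brk C u (w1 + w2) = brk C u w1 + brk C u w2.
Proof. by apply/rowP => k; rewrite [LHS]mxE linearD /= mulmxDr [LHS]mxE [RHS]mxE !mxE. Qed.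

Lemma brk0 (R : fieldType) p q (C : 'I_p -> 'M[R]_q) u : brk C u 0 = 0.
Proof. by apply/rowP => k; rewrite !mxE big1 // => j _; rewrite !mxE mulr0. Qed.

Lemma entry_trT (R : fieldType) n p (z : 'rV[R]_p) (M : 'M[R]_(n, p)) j :
  (z *m M^T) 0 j = (z *m (row j M)^T) 0 0.
Proof. by rewrite !mxE; apply: eq_bigr => i _; rewrite !mxE. Qed.

Lemma kill_all (R : fieldType) q (M : 'M[R]_q) (u : 'rV[R]_q) :
  (forall w : 'rV[R]_q, (w *m M *m u^T) 0 0 = 0) -> u *m M^T = 0.
Proof.
move=> H; suff: M *m u^T = 0 by move=> /(congr1 trmx); rewrite trmx_mul trmxK trmx0.
apply/matrixP => i j; rewrite (ord1 j) [RHS]mxE -(H (delta_mx 0 i)) -mulmxA -rowE.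
by rewrite [RHS]mxE.
Qed.

Definition prodsp (R : fieldType) (q p : nat) (S : 'M[R]_q) (T : 'M[R]_p) : {vspace 'rV[R]_(q+p)} :=
  lker (linfun (mulmxr (block_mx (cokermx S) 0 0 (cokermx T)))).
Lemma mem_prodsp (R : fieldType) (q p : nat) (S : 'M[R]_q) (T : 'M[R]_p) x :
  (x \in prodsp S T) = (lsubmx x <= S)%MS && (rsubmx x <= T)%MS.
Proof.
rewrite memv_ker lfunE /= -{1}(hsubmxK x) mul_row_block !mulmx0 addr0 add0r.
by rewrite row_mx_eq0 !submxE.
Qed.

Definition cf (R : fieldType) p q (C : 'I_p -> 'M[R]_q) (M : 'M[R]_q) : 'rV[R]_p :=
  \row_k coord (ftup C) k M.

Lemma PhiK (R : fieldType) p q (C : 'I_p -> 'M[R]_q) M :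
  M \in <<ftup C>>%VS -> Phi C (cf C M) = M.
Proof.
move=> HM; rewrite {2}(coord_span HM) /Phi; apply: eq_bigr => k _.
by rewrite mxE ftup_nth.
Qed.

Lemma cf_sum (R : fieldType) p q (C : 'I_p -> 'M[R]_q) n (c : 'I_n -> R) F :
  cf C (\sum_(i < n) c i *: F i) = \sum_i c i *: cf C (F i).
Proof.
by apply/rowP => k; rewrite mxE linear_sum summxE; apply: eq_bigr => i _; rewrite linearZ !mxE.
Qed.

Lemma cfD (R : fieldType) p q (C : 'I_p -> 'M[R]_q) M N :
  cf C (M + N) = cf C M + cf C N.
Proof. by apply/rowP => k; rewrite !mxE linearD. Qed.

Lemma cfC (R : fieldType) p q (C : 'I_p -> 'M[R]_q) m :
  free (ftup C) -> cf C (C m) = delta_mx 0 m.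
Proof. by move=> Hf; apply/rowP => k; rewrite !mxE -{1}(ftup_nth C m) coord_free // eqxx andTb eq_sym. Qed.

Lemma kerT (R : fieldType) q (M : 'M[R]_q) (u : 'rV[R]_q) :
  (u <= ker_map M)%MS -> M *m u^T = 0.
Proof. by rewrite /ker_map sub_kermx => /eqP/(congr1 trmx); rewrite trmx_mul trmxK trmx0. Qed.

Lemma lie_bracketE (R : fieldType) p q (C : 'I_p -> 'M[R]_q) x y :
  lie_bracket C x y = row_mx 0 (brk C (lsubmx x) (lsubmx y)).
Proof. by []. Qed.

Lemma converse (R : fieldType) p q (C : 'I_p -> 'M[R]_q)
  (Hfree : free (map C (enum 'I_p))) l k (A : 'I_l -> 'M[R]_q) (B : 'I_k -> 'M[R]_q) :
  (0 < l)%N -> (0 < k)%N ->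
  basis_of (<<map C (enum 'I_p)>>%VS) (map A (enum 'I_l) ++ map B (enum 'I_k)) ->
  ((\bigcap_(i < k) ker_map (B i)) + (\bigcap_(i < l) ker_map (A i)) == (1%:M : 'M[R]_q))%MS ->
  ((\bigcap_(i < k) ker_map (B i)) :&: (\bigcap_(i < l) ker_map (A i)) == (0 : 'M[R]_q))%MS ->
  decomposable C.
Proof.
move=> l0 k0 /andP[/eqP Hspan HfreeX] Hsum Hcap.
have HfT : free (ftup C) := Hfree.
have dimG : \dim <<map C (enum 'I_p)>> = p.
  by move/eqP: Hfree; rewrite size_map size_enum_ord.
have lkp : (l + k = p)%N.
  have sz : size (map A (enum (ordinal l)) ++ map B (enum (ordinal k))) = (l + k)%N by rewrite size_cat (size_tuple (ftup A)) (size_tuple (ftup B)).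
  by move: HfreeX; rewrite /free sz Hspan dimG => /eqP.
have memA i : A i \in <<ftup C>>%VS.
  by rewrite /= -Hspan; apply: memv_span; rewrite mem_cat map_f ?mem_enum.
have memB i : B i \in <<ftup C>>%VS.
  by rewrite /= -Hspan; apply: memv_span; rewrite mem_cat map_f ?mem_enum ?orbT.
pose Ma := \matrix_(i < l) cf C (A i).
pose Mb := \matrix_(i < k) cf C (B i).
have Hfull : (1%:M <= col_mx Ma Mb)%MS.
  apply/row_subP => m; rewrite row1 -(cfC m HfT).
  have : C m \in <<map A (enum 'I_l) ++ map B (enum 'I_k)>>%VS.
    by rewrite Hspan; apply: memv_span; rewrite map_f ?mem_enum.
  rewrite span_cat => /memv_addP [a Ha [b Hb ->]].
  have Ha' : a \in <<ftup A>>%VS := Ha.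
  have Hb' : b \in <<ftup B>>%VS := Hb.
  rewrite (coord_span Ha') (coord_span Hb') cfD !cf_sum.
  apply: addmx_sub; apply: summx_sub => i _; apply: scalemx_sub;
    rewrite ftup_nth.
    by rewrite -(rowK (fun i => cf C (A i)) i) -(rowKu i Ma Mb) row_sub.
  by rewrite -(rowK (fun i => cf C (B i)) i) -(rowKd i Ma Mb) row_sub.
have Hrk : \rank (col_mx Ma Mb) = p by apply/eqP; move: Hfull; rewrite sub1mx.
pose Ta := kermx Ma^T; pose Tb := kermx Mb^T.
have capT (z : 'rV[R]_p) : (z <= Ta)%MS -> (z <= Tb)%MS -> z = 0.
  rewrite !sub_kermx => /eqP za /eqP zb.
  have K0 : kermx (col_mx Ma Mb)^T = 0.
    by apply/eqP; rewrite -mxrank_eq0 mxrank_ker mxrank_tr Hrk subnn.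
  apply/eqP; rewrite -submx0 -K0 sub_kermx tr_col_mx mul_mx_row za zb.
  by rewrite row_mx0.
have rkTa : (k <= \rank Ta)%N.
  rewrite mxrank_ker mxrank_tr; apply: leq_trans (leq_sub2l p (rank_leq_row Ma)).
  by rewrite -lkp addKn.
have rkTb : (l <= \rank Tb)%N.
  rewrite mxrank_ker mxrank_tr; apply: leq_trans (leq_sub2l p (rank_leq_row Mb)).
  by rewrite -lkp addnK.
have Tsum : (1%:M <= Tb + Ta)%MS.
  rewrite sub1mx /row_full eqn_leq rank_leq_col /=.
  have capz : \rank (Tb :&: Ta)%MS = 0%N.
    apply/eqP; rewrite mxrank_eq0 -submx0; apply/row_subP => i.
    have := row_sub i (Tb :&: Ta)%MS; rewrite sub_capmx => /andP[h1 h2].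
    by rewrite (capT _ h2 h1) sub0mx.
  have := mxrank_sum_cap Tb Ta; rewrite capz addn0 => ->.
  by apply: leq_trans (leq_add rkTb rkTa); rewrite lkp.
pose U1 : 'M[R]_q := (\bigcap_(i < k) ker_map (B i))%MS.
pose U2 : 'M[R]_q := (\bigcap_(i < l) ker_map (A i))%MS.
exists (prodsp U1 Tb), (prodsp U2 Ta); split.
- move=> x y; rewrite !mem_prodsp lie_bracketE row_mxKl row_mxKr sub0mx /=.
  move=> /andP[Hy _]; rewrite sub_kermx; apply/eqP/rowP => j.
  rewrite [RHS]mxE entry_trT rowK brk_Phi PhiK // -mulmxA kerT; first by rewrite mulmx0 mxE.
  by move/sub_bigcapmxP: Hy; apply.
- move=> x y; rewrite !mem_prodsp lie_bracketE row_mxKl row_mxKr sub0mx /=.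
  move=> /andP[Hy _]; rewrite sub_kermx; apply/eqP/rowP => j.
  rewrite [RHS]mxE entry_trT rowK brk_Phi PhiK // -mulmxA kerT; first by rewrite mulmx0 mxE.
  by move/sub_bigcapmxP: Hy; apply.
- apply/negP => /eqP I0.
  have : row_mx 0 (nz_row Tb) \in prodsp U1 Tb.
    by rewrite mem_prodsp row_mxKl row_mxKr sub0mx nz_row_sub.
  rewrite I0 memv0 -row_mx0 => /eqP/eq_row_mx[_ /eqP].
  rewrite nz_row_eq0 -mxrank_eq0 => /eqP r0.
  by move: rkTb; rewrite r0 leqn0 => /eqP l00; move: l0; rewrite l00.
- apply/negP => /eqP I0.
  have : row_mx 0 (nz_row Ta) \in prodsp U2 Ta.
    by rewrite mem_prodsp row_mxKl row_mxKr sub0mx nz_row_sub.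
  rewrite I0 memv0 -row_mx0 => /eqP/eq_row_mx[_ /eqP].
  rewrite nz_row_eq0 -mxrank_eq0 => /eqP r0.
  by move: rkTa; rewrite r0 leqn0 => /eqP k00; move: k0; rewrite k00.
split.
  apply/eqP; rewrite eqEsubv subvf /=; apply/subvP => x _.
  have /sub_addsmxP [[a b] Hu] : (lsubmx x <= U1 + U2)%MS.
    by apply: submx_trans (submx1 _) _; case/andP: Hsum.
  have /sub_addsmxP [[c d] Hz] : (rsubmx x <= Tb + Ta)%MS.
    exact: submx_trans (submx1 _) Tsum.
  apply/memv_addP; exists (row_mx (a *m U1) (c *m Tb)).
    by rewrite mem_prodsp row_mxKl row_mxKr !submxMl.
  exists (row_mx (b *m U2) (d *m Ta)).
    by rewrite mem_prodsp row_mxKl row_mxKr !submxMl.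
  by rewrite add_row_mx /= -Hu -Hz hsubmxK.
apply/eqP; rewrite -subv0; apply/subvP => x /memv_capP [hI hJ].
have /andP[h1 h2] : (lsubmx x <= U1)%MS && (rsubmx x <= Tb)%MS.
  by rewrite -mem_prodsp; exact: hI.
have /andP[h3 h4] : (lsubmx x <= U2)%MS && (rsubmx x <= Ta)%MS.
  by rewrite -mem_prodsp; exact: hJ.
have L0 : lsubmx x = 0.
  apply/eqP; rewrite -submx0; apply: submx_trans (proj1 (andP Hcap)).
  by rewrite sub_capmx h1 h3.
by rewrite memv0 -(hsubmxK x) L0 (capT _ h4 h2) row_mx0.
Qed.

Lemma nth_cat_l (R : fieldType) (vT : vectType R) n m (e : n.-tuple vT) (f : m.-tuple vT) (i : 'I_n) :
  (cat_tuple e f)`_(lshift m i) = e`_i.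
Proof. by rewrite /= nth_cat size_tuple /= ltn_ord. Qed.

Lemma nth_cat_r (R : fieldType) (vT : vectType R) n m (e : n.-tuple vT) (f : m.-tuple vT) (j : 'I_m) :
  (cat_tuple e f)`_(rshift n j) = f`_j.
Proof. by rewrite /= nth_cat size_tuple /= ltnNge leq_addr /= addKn. Qed.

Lemma coord_cat_l (R : fieldType) (vT : vectType R) n m (e : n.-tuple vT) (f : m.-tuple vT) z (i : 'I_n) :
  free (cat_tuple e f) -> z \in <<f>>%VS -> coord (cat_tuple e f) (lshift m i) z = 0.
Proof.
move=> Hf Hz; rewrite (coord_span Hz) linear_sum big1 // => j _.
by rewrite linearZ /= -(nth_cat_r e f j) coord_free // eq_rlshift mulr0.
Qed.

Lemma coord_cat_r (R : fieldType) (vT : vectType R) n m (e : n.-tuple vT) (f : m.-tuple vT) z (j : 'I_m) :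
  free (cat_tuple e f) -> z \in <<e>>%VS -> coord (cat_tuple e f) (rshift n j) z = 0.
Proof.
move=> Hf Hz; rewrite (coord_span Hz) linear_sum big1 // => i _.
by rewrite linearZ /= -(nth_cat_l e f i) coord_free // eq_lrshift mulr0.
Qed.

Lemma Phi_sum (R : fieldType) p q (C : 'I_p -> 'M[R]_q) n (c : 'I_n -> R) om :
  \sum_i c i *: Phi C (om i) = Phi C (\sum_i c i *: om i).
Proof.
rewrite /Phi; under eq_bigr do rewrite scaler_sumr.
rewrite exchange_big; apply: eq_bigr => k _; rewrite summxE scaler_suml.
by apply: eq_bigr => i _; rewrite mxE scalerA.
Qed.

Lemma Phi_delta (R : fieldType) p q (C : 'I_p -> 'M[R]_q) m : Phi C (delta_mx 0 m) = C m.
Proof.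
rewrite /Phi (bigD1 m) //= mxE !eqxx scale1r big1 ?addr0 // => k /negPf nk.
by rewrite mxE nk andbF scale0r.
Qed.

Lemma Phi_span (R : fieldType) p q (C : 'I_p -> 'M[R]_q) om :
  Phi C om \in <<map C (enum 'I_p)>>%VS.
Proof.
by apply: memv_suml => k _; apply: memvZ; apply: memv_span; rewrite map_f // mem_enum.
Qed.

Lemma coord_row (R : fieldType) p n (X : n.-tuple 'rV[R]_p) i (b : 'rV[R]_p) :
  (b *m (\row_m coord X i (delta_mx 0 m))^T) 0 0 = coord X i b.
Proof.
rewrite {2}(row_sum_delta b) linear_sum mxE; apply: eq_bigr => m _.
by rewrite linearZ !mxE.
Qed.

Lemma forward (R : fieldType) p q (C : 'I_p -> 'M[R]_q)
  (Hskew : forall k, (C k)^T = - C k)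
  (Hfree : free (map C (enum 'I_p)))
  (Hcenter : forall x : 'rV[R]_q, (forall k, x *m C k = 0) -> x = 0) :
  decomposable C ->
  exists (l k : nat) (A : 'I_l -> 'M[R]_q) (B : 'I_k -> 'M[R]_q),
    [/\ (0 < l)%N, (0 < k)%N,
        basis_of (<<map C (enum 'I_p)>>%VS)
                 (map A (enum 'I_l) ++ map B (enum 'I_k)),
        ((\bigcap_(i < k) ker_map (B i)) + (\bigcap_(i < l) ker_map (A i)) == (1%:M : 'M[R]_q))%MS
      & ((\bigcap_(i < k) ker_map (B i)) :&: (\bigcap_(i < l) ker_map (A i)) == (0 : 'M[R]_q))%MS].
Proof.
case=> I [J] [HI HJ I0 J0 [Hsum Hcap]].
have cent (v : 'rV[R]_q) : (forall w, brk C w v = 0) -> v = 0.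
  move=> H; apply: Hcenter => k.
  have : v *m (C k)^T = 0.
    apply: kill_all => w; have := congr1 (fun r : 'rV[R]_p => r 0 k) (H w).
    by rewrite /= [LHS]mxE [RHS]mxE.
  by rewrite Hskew mulmxN => /eqP; rewrite oppr_eq0 => /eqP.
have capIJ x : x \in I -> x \in J -> x = 0.
  move=> xI xJ; apply/eqP; rewrite -memv0 -Hcap; exact/memv_capP.
have brkI y w : y \in I -> row_mx 0 (brk C w (lsubmx y)) \in I.
  by move=> Hy; have := HI (row_mx w 0) y Hy; rewrite lie_bracketE row_mxKl.
have brkJ y w : y \in J -> row_mx 0 (brk C w (lsubmx y)) \in J.
  by move=> Hy; have := HJ (row_mx w 0) y Hy; rewrite lie_bracketE row_mxKl.
pose iZ : 'Hom('rV[R]_p, 'rV[R]_(q + p)) := linfun (mulmxr (row_mx 0 1%:M : 'M[R]_(p, q + p))).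
have iZE (z : 'rV[R]_p) : iZ z = row_mx 0 z by rewrite lfunE /= mul_mx_row mulmx0 mulmx1.
pose Z1 := (iZ @^-1: I)%VS; pose Z2 := (iZ @^-1: J)%VS.
have memZ1 (z : 'rV[R]_p) : (z \in Z1) = (row_mx 0 z \in I) by rewrite -memv_preim iZE.
have memZ2 (z : 'rV[R]_p) : (z \in Z2) = (row_mx 0 z \in J) by rewrite -memv_preim iZE.
have dec (z : 'rV[R]_p) : exists2 z1, z1 \in Z1 & exists2 z2, z2 \in Z2 & z = z1 + z2.
  have : row_mx 0 z \in (I + J)%VS by rewrite Hsum memvf.
  case/memv_addP => i Hi [j Hj Hij].
  have [L R'] : 0 = lsubmx i + lsubmx j /\ z = rsubmx i + rsubmx j.
    by apply: eq_row_mx; rewrite Hij -{1}(hsubmxK i) -{1}(hsubmxK j) add_row_mx.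
  have Li : lsubmx i = 0.
    apply: cent => w.
    suff h : row_mx (0 : 'rV[R]_q) (brk C w (lsubmx i)) = 0.
      by have := congr1 rsubmx h; rewrite row_mxKr => ->; apply/rowP => k'; rewrite !mxE.
    apply: capIJ; first exact: brkI.
    have -> : brk C w (lsubmx i) = - brk C w (lsubmx j).
      by apply/eqP; rewrite -addr_eq0 -brkD -L brk0.
    have -> : row_mx (0 : 'rV[R]_q) (- brk C w (lsubmx j)) = - row_mx 0 (brk C w (lsubmx j)).
      by rewrite opp_row_mx oppr0.
    rewrite memvN; exact: brkJ.
  have Lj : lsubmx j = 0 by move/esym: L; rewrite Li add0r.
  exists (rsubmx i); first by rewrite memZ1 -Li hsubmxK.
  exists (rsubmx j); first by rewrite memZ2 -Lj hsubmxK.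
  exact: R'.
have capZ (z : 'rV[R]_p) : z \in Z1 -> z \in Z2 -> z = 0.
  rewrite memZ1 memZ2 => h1 h2; have h := capIJ _ h1 h2.
  by have := congr1 rsubmx h; rewrite row_mxKr => ->; apply/rowP => k'; rewrite !mxE.
have Z1ne : Z1 != 0%VS.
  apply/negP => /eqP Z10; move/negP: I0; apply; rewrite -subv0; apply/subvP => x xI.
  have Lx : lsubmx x = 0.
    apply: cent => w; have : brk C w (lsubmx x) \in Z1 by rewrite memZ1; exact: brkI.
    by rewrite Z10 memv0 => /eqP.
  have : rsubmx x \in Z1 by rewrite memZ1 -Lx hsubmxK.
  by rewrite Z10 !memv0 => /eqP Rx; rewrite -(hsubmxK x) Lx Rx row_mx0.
have Z2ne : Z2 != 0%VS.
  apply/negP => /eqP Z20; move/negP: J0; apply; rewrite -subv0; apply/subvP => x xJ.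
  have Lx : lsubmx x = 0.
    apply: cent => w; have : brk C w (lsubmx x) \in Z2 by rewrite memZ2; exact: brkJ.
    by rewrite Z20 memv0 => /eqP.
  have : rsubmx x \in Z2 by rewrite memZ2 -Lx hsubmxK.
  by rewrite Z20 !memv0 => /eqP Rx; rewrite -(hsubmxK x) Lx Rx row_mx0.
pose e := vbasis Z1; pose f := vbasis Z2; pose ef := cat_tuple e f.
have ZZ : (Z1 + Z2)%VS = fullv.
  apply/eqP; rewrite eqEsubv subvf /=; apply/subvP => z _.
  by have [z1 h1 [z2 h2 ->]] := dec z; apply: memv_add.
have Zcap : (Z1 :&: Z2)%VS = 0%VS.
  apply/eqP; rewrite -subv0; apply/subvP => z /memv_capP [h1 h2].
  by rewrite memv0 (capZ z h1 h2).
have spe : <<e>>%VS = Z1 := span_basis (vbasisP Z1).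
have spf : <<f>>%VS = Z2 := span_basis (vbasisP Z2).
have span_ef : <<ef>>%VS = fullv by rewrite /= span_cat spe spf ZZ.
have free_ef : free ef.
  rewrite /= cat_free (basis_free (vbasisP Z1)) (basis_free (vbasisP Z2)) /= spe spf.
  by apply/directv_addP.
pose l := \dim Z1; pose k := \dim Z2.
pose D (i : 'I_(l + k)) := Phi C (\row_m coord ef i (delta_mx 0 m)).
have DE i u w : (u *m D i *m w^T) 0 0 = coord ef i (brk C u w).
  by rewrite -brk_Phi coord_row.
pose A (i : 'I_l) := D (lshift k i); pose B (j : 'I_k) := D (rshift l j).
have kerJ y (i : 'I_l) : y \in J -> (lsubmx y <= ker_map (A i))%MS.
  move=> Hy; rewrite /ker_map sub_kermx; apply/eqP; apply: kill_all => w.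
  rewrite DE coord_cat_l // spf memZ2; exact: brkJ.
have kerI y (j : 'I_k) : y \in I -> (lsubmx y <= ker_map (B j))%MS.
  move=> Hy; rewrite /ker_map sub_kermx; apply/eqP; apply: kill_all => w.
  rewrite DE coord_cat_r // spe memZ1; exact: brkI.
have recon m : C m = \sum_(i < l + k) (ef`_i) 0 m *: D i.
  rewrite /D Phi_sum -Phi_delta; congr (Phi C _); apply/rowP => m'.
  rewrite summxE; transitivity ((delta_mx 0 m' : 'rV[R]_p) 0 m); first by rewrite !mxE eq_sym.
  have hs : (delta_mx 0 m' : 'rV[R]_p) = \sum_i coord ef i (delta_mx 0 m') *: ef`_i.
    by apply: coord_span; rewrite span_ef memvf.
  by rewrite {1}hs summxE; apply: eq_bigr => i _; rewrite !mxE mulrC.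
have capU (u : 'rV[R]_q) : (u <= \bigcap_(j < k) ker_map (B j))%MS ->
    (u <= \bigcap_(i < l) ker_map (A i))%MS -> u = 0.
  move=> /sub_bigcapmxP hB /sub_bigcapmxP hA.
  have hD i : D i *m u^T = 0.
    by case: (split_ordP i) => j ->; apply: kerT; [exact: (hA j isT) | exact: (hB j isT)].
  apply: Hcenter => m.
  have : C m *m u^T = 0.
    by rewrite (recon m) mulmx_suml big1 // => i _; rewrite -scalemxAl hD scaler0.
  move/(congr1 trmx); rewrite trmx_mul trmxK Hskew mulmxN trmx0 => /eqP.
  by rewrite oppr_eq0 => /eqP.
have dimG : \dim <<map C (enum 'I_p)>> = p.
  by move/eqP: Hfree; rewrite size_map size_enum_ord.
have lkp : (l + k = p)%N.
  by have := dimv_sum_cap Z1 Z2; rewrite ZZ Zcap dimv0 addn0 dimvf dim_matrix mul1r => ->.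
exists l, k, A, B; split.
- by rewrite lt0n dimv_eq0.
- by rewrite lt0n dimv_eq0.
- have sub1 : (<<map A (enum 'I_l) ++ map B (enum 'I_k)>> <= <<map C (enum 'I_p)>>)%VS.
    by apply/span_subvP => M; rewrite mem_cat => /orP [] /mapP [i _ ->]; apply: Phi_span.
  have sub2 : (<<map C (enum 'I_p)>> <= <<map A (enum 'I_l) ++ map B (enum 'I_k)>>)%VS.
    apply/span_subvP => M /mapP [m _ ->]; rewrite (recon m) big_split_ord /=.
    apply: memvD; apply: memv_suml => i _; apply: memvZ; apply: memv_span;
      rewrite mem_cat; apply/orP; [left | right]; apply/mapP; exists i; rewrite ?mem_enum //.
  have Hsp : <<map A (enum 'I_l) ++ map B (enum 'I_k)>>%VS = <<map C (enum 'I_p)>>%VS.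
    by apply/eqP; rewrite eqEsubv sub1 sub2.
  have sz : size (map A (enum (ordinal l)) ++ map B (enum (ordinal k))) = (l + k)%N.
    by rewrite size_cat (size_tuple (ftup A)) (size_tuple (ftup B)).
  by rewrite /basis_of /free Hsp eqxx sz dimG lkp eqxx.
- apply/andP; split; first exact: submx1.
  apply/row_subP => m.
  have : row_mx (row m 1%:M) (0 : 'rV[R]_p) \in (I + J)%VS by rewrite Hsum memvf.
  case/memv_addP => i Hi [j Hj Hij].
  have [-> _] : row m 1%:M = lsubmx i + lsubmx j /\ (0 : 'rV[R]_p) = rsubmx i + rsubmx j.
    by apply: eq_row_mx; rewrite Hij -{1}(hsubmxK i) -{1}(hsubmxK j) add_row_mx.
  apply: addmx_sub_adds; apply/sub_bigcapmxP => i' _; [exact: kerI | exact: kerJ].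
- apply/andP; split; last exact: sub0mx.
  apply/row_subP => m; have := row_sub m
    (\bigcap_(j < k) ker_map (B j) :&: \bigcap_(i < l) ker_map (A i))%MS.
  by rewrite sub_capmx => /andP[h1 h2]; rewrite (capU _ h1 h2) sub0mx.
Qed.

End Aux.

Theorem mainTheorem9 (R : rcfType) (p q : nat) (C : 'I_p -> 'M[R]_q)
  (* two-step nilpotent: [N,N] <> 0 *)
  (Hp : (0 < p)%N)
  (* structure matrices lie in so(q) *)
  (Hskew : forall k, (C k)^T = - C k)
  (* {Z_k} is a basis of [N,N]: the C_k are linearly independent *)
  (Hfree : free (map C (enum 'I_p)))
  (* the center of N is exactly Z *)
  (Hcenter : forall x : 'rV[R]_q, (forall k, x *m C k = 0) -> x = 0) :
  decomposable C <->
  exists (l k : nat) (A : 'I_l -> 'M[R]_q) (B : 'I_k -> 'M[R]_q),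
    [/\ (0 < l)%N, (0 < k)%N,
        basis_of (<<map C (enum 'I_p)>>%VS)
                 (map A (enum 'I_l) ++ map B (enum 'I_k)),
        ((\bigcap_(i < k) ker_map (B i)) + (\bigcap_(i < l) ker_map (A i)) == (1%:M : 'M[R]_q))%MS
      & ((\bigcap_(i < k) ker_map (B i)) :&: (\bigcap_(i < l) ker_map (A i)) == (0 : 'M[R]_q))%MS].
Proof.
split; first exact: (Aux.forward Hskew Hfree Hcenter).
case=> l [k] [A] [B] [l0 k0 Hb Hs Hc].
exact: (Aux.converse Hfree l0 k0 Hb Hs Hc).
Qed.
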